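(* Let $A,B$ be Pareto sets of size $n$ each, sorted lexicographically, with Minkowski matrix $M_{ij}=A_i+B_j$, and let a query range $R=[x_{\min},x_{\max})\times[y_{\min},y_{\max})$ be given. The sweep procedure returns the lexicographically smallest entry of $M$ lying in $R$ (or reports that none exists), and it runs in $\mathcal{O}(n)$ time.
   Context: A Pareto set is a set $S\subset\mathbb{R}^2$ in which no point dominates another ($p$ dominates $p'$ if $p\ne p'$, $p.x\le p'.x$, $p.y\le p'.y$); sorted lexicographically, its $x$-coordinates strictly increase and $y$-coordinates strictly decrease, so for $s\ge i$, $t\ge j$ the entry $M_{st}$ has $x$-coordinate at least and $y$-coordinate at most those of $M_{ij}$. Entries of $M$ are computed on demand. The sweep procedure: keep a current candidate (initially none) and a current row index $i$, starting at $i=n$ in column $1$. For columns $j=1,\dots,n$ in order: starting at row $i$ of column $j$, move upward (decrease $i$) by linear search as long as $i\ge 2$ and the entry $M_{i-1,j}$ still satisfies $x\ge x_{\min}$ and $y<y_{\max}$ (no movement if $M_{ij}$ itself violates $x\ge x_{\min}$ or $y<y_{\max}$); then if $M_{ij}\in R$ and it is lexicographically smaller than the current candidate (or there is no candidate yet), make it the candidate; then proceed to column $j+1$ keeping the same row index $i$. After the last column, return the candidate. *)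

(* Defs.v *)
From mathcomp Require Import all_boot all_order all_algebra.
Set Implicit Arguments. Unset Strict Implicit. Unset Printing Implicit Defensive.
Import Order.TTheory GRing.Theory Num.Theory.
Local Open Scope ring_scope.

Section Pareto.
Variable R : realFieldType.
Notation pt := (R * R)%type.

Definition dominates (p q : pt) : bool :=
  [&& p != q, p.1 <= q.1 & p.2 <= q.2].

Definition pareto (s : seq pt) : Prop :=
  forall p q, p \in s -> q \in s -> ~~ dominates p q.

Definition lex_lt (p q : pt) : bool :=
  (p.1 < q.1) || ((p.1 == q.1) && (p.2 < q.2)).
Definition lex_le (p q : pt) : bool := (p == q) || lex_lt p q.

(* A Pareto set of size n, listed in lexicographically sorted order
   (this also forces the n points to be distinct). *)
Definition sorted_pareto (n : nat) (s : seq pt) : Prop :=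
  [/\ size s = n, pareto s & sorted lex_lt s].

(* Minkowski matrix, 0-indexed: M i j = A_i + B_j *)
Definition mink (A B : seq pt) (i j : nat) : pt :=
  ((nth (0, 0) A i).1 + (nth (0, 0) B j).1,
   (nth (0, 0) A i).2 + (nth (0, 0) B j).2).

Definition in_range (xmin xmax ymin ymax : R) (p : pt) : bool :=
  [&& xmin <= p.1, p.1 < xmax, ymin <= p.2 & p.2 < ymax].

Definition climb_ok (xmin ymax : R) (p : pt) : bool :=
  (xmin <= p.1) && (p.2 < ymax).

(* Upward linear search in column j from current row i (0-indexed; the
   paper's condition "i >= 2" becomes "i >= 1").  Returns the new row and
   the number of matrix entries computed. *)
Fixpoint climb (A B : seq pt) (xmin ymax : R) (j i : nat) : nat * nat :=
  match i with
  | 0 => (0%N, 0%N)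
  | i'.+1 =>
      if climb_ok xmin ymax (mink A B i' j) then
        let r := climb A B xmin ymax j i' in (r.1, r.2.+1)
      else (i, 1%N)
  end.

Definition sweep_step (A B : seq pt) (xmin xmax ymin ymax : R)
    (st : option pt * nat * nat) (j : nat) : option pt * nat * nat :=
  let: (cand, i, cost) := st in
  let r := climb A B xmin ymax j i in
  let p := mink A B r.1 j in
  let better := if cand is Some c then lex_lt p c else true in
  let cand' := if in_range xmin xmax ymin ymax p && better then Some p
               else cand in
  (cand', r.1, (cost + r.2 + 1)%N).

Definition sweep_full (n : nat) (A B : seq pt) (xmin xmax ymin ymax : R)
  : option pt * nat * nat :=
  foldl (sweep_step A B xmin xmax ymin ymax) (None, n.-1, 0%N) (iota 0 n).

Definition sweep (n : nat) (A B : seq pt) (xmin xmax ymin ymax : R)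
  : option pt := (sweep_full n A B xmin xmax ymin ymax).1.1.

(* number of elementary steps: matrix entries computed + one per column *)
Definition sweep_cost (n : nat) (A B : seq pt) (xmin xmax ymin ymax : R)
  : nat := (sweep_full n A B xmin xmax ymin ymax).2.

Definition lex_min_in_range (n : nat) (A B : seq pt) (xmin xmax ymin ymax : R)
    (res : option pt) : Prop :=
  match res with
  | None => forall i j, (i < n)%N -> (j < n)%N ->
              ~~ in_range xmin xmax ymin ymax (mink A B i j)
  | Some p => [/\ exists i j, [/\ (i < n)%N, (j < n)%N & p = mink A B i j],
                 in_range xmin xmax ymin ymax p
               & forall i j, (i < n)%N -> (j < n)%N ->
                   in_range xmin xmax ymin ymax (mink A B i j) ->
                   lex_le p (mink A B i j)]
  end.

End Pareto.

(* Main.v *)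
Require Import Defs.
From mathcomp Require Import all_boot all_order all_algebra.
From mathcomp Require Import lra zify.
Set Implicit Arguments. Unset Strict Implicit.
Import Order.TTheory GRing.Theory Num.Theory.
Local Open Scope ring_scope.

Section Lex.
Variable R : realFieldType.
Implicit Types p q r : (R * R)%type.

Lemma lex_lt_trans : transitive (@lex_lt R).
Proof. move=> [a b] [c d] [e f]; rewrite /lex_lt /=; lra. Qed.

Lemma lex_le_trans p q r : lex_le p q -> lex_le q r -> lex_le p r.
Proof.
case: p q r => [a b] [c d] [e f]; rewrite /lex_le /lex_lt !xpair_eqE /=; lra.
Qed.

Lemma lex_lt_le_trans p q r : lex_lt p q -> lex_le q r -> lex_le p r.
Proof.
case: p q r => [a b] [c d] [e f]; rewrite /lex_le /lex_lt !xpair_eqE /=; lra.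
Qed.

Lemma lex_total p q : ~~ lex_lt p q -> lex_le q p.
Proof.
case: p q => [a b] [c d]; rewrite /lex_le /lex_lt !xpair_eqE /=; lra.
Qed.

Lemma sp_strict (s : seq (R * R)) m : sorted_pareto m s ->
  forall i k, (i < k)%N -> (k < m)%N ->
  (nth (0,0) s i).1 < (nth (0,0) s k).1 /\ (nth (0,0) s k).2 < (nth (0,0) s i).2.
Proof.
case=> sz par srt i k ik km.
have hl : lex_lt (nth (0,0) s i) (nth (0,0) s k).
  apply: (sorted_ltn_nth lex_lt_trans) => //; rewrite inE sz //.
  by apply: ltn_trans km.
have hd := par _ _ (mem_nth (0,0) (_ : (i < size s)%N)) (mem_nth (0,0) (_ : (k < size s)%N)).
have := hd (ltac:(rewrite sz; lia)) (ltac:(rewrite sz; lia)).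
move: hl; case: (nth _ s i) => a b; case: (nth _ s k) => c d.
rewrite /dominates /lex_lt xpair_eqE /=; lra.
Qed.

Lemma sp_weak (s : seq (R * R)) m : sorted_pareto m s ->
  forall i k, (i <= k)%N -> (k < m)%N ->
  (nth (0,0) s i).1 <= (nth (0,0) s k).1 /\ (nth (0,0) s k).2 <= (nth (0,0) s i).2.
Proof.
move=> H i k; rewrite leq_eqVlt => /orP[/eqP->|ik] km; first by [].
have [h1 h2] := sp_strict H ik km; split; exact: ltW.
Qed.

End Lex.

Section Climb.
Variable R : realFieldType.
Variables (A B : seq (R * R)) (xmin ymax : R) (j : nat).
Notation f k := (climb_ok xmin ymax (mink A B k j)).

Lemma climb_cost i : ((climb A B xmin ymax j i).1 + (climb A B xmin ymax j i).2 <= i.+1)%N.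
Proof.
elim: i => [//|i IH] /=; case: ifP => //= _; lia.
Qed.

Lemma climb_spec i : let r := (climb A B xmin ymax j i).1 in
  [/\ (r <= i)%N, forall k, (r <= k)%N -> (k < i)%N -> f k &
      (0 < r)%N -> ~~ f r.-1].
Proof.
elim: i => [|i IH] /=; first by split => // k; lia.
case: ifP => /= fi.
  case: IH => h1 h2 h3; split => //; first lia.
  move=> k rk; rewrite ltnS leq_eqVlt => /orP[/eqP->//|]; exact: h2.
by split => // k; lia.
Qed.
End Climb.

Section Main.
Variable R : realFieldType.
Variables (n : nat) (A B : seq (R * R)) (xmin xmax ymin ymax : R).
Hypothesis HA : sorted_pareto n A.
Hypothesis HB : sorted_pareto n B.
Notation M := (mink A B).
Notation f k j := (climb_ok xmin ymax (M k j)).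

Lemma row_strict k k' j : (k < k')%N -> (k' < n)%N -> (M k j).1 < (M k' j).1.
Proof.
move=> h1 h2; have [a _] := sp_strict HA h1 h2; rewrite /mink /=; lra.
Qed.

Lemma row_weak k k' j : (k <= k')%N -> (k' < n)%N ->
  (M k j).1 <= (M k' j).1 /\ (M k' j).2 <= (M k j).2.
Proof.
move=> h1 h2; have [a b] := sp_weak HA h1 h2; rewrite /mink /=; split; lra.
Qed.

Lemma col_weak k j j' : (j <= j')%N -> (j' < n)%N ->
  (M k j).1 <= (M k j').1 /\ (M k j').2 <= (M k j).2.
Proof.
move=> h1 h2; have [a b] := sp_weak HB h1 h2; rewrite /mink /=; split; lra.
Qed.

Lemma f_row k k' j : f k j -> (k <= k')%N -> (k' < n)%N -> f k' j.
Proof.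
move=> + h1 h2; have [a b] := row_weak j h1 h2.
rewrite /climb_ok; lra.
Qed.

Lemma f_col k j j' : f k j -> (j <= j')%N -> (j' < n)%N -> f k j'.
Proof.
move=> + h1 h2; have [a b] := col_weak k h1 h2.
rewrite /climb_ok; lra.
Qed.

Definition cand_ok (j : nat) (cand : option (R * R)) : Prop :=
  match cand with
  | None => forall i j', (i < n)%N -> (j' < j)%N ->
              ~~ in_range xmin xmax ymin ymax (M i j')
  | Some p => [/\ exists i j', [/\ (i < n)%N, (j' < n)%N & p = M i j'],
                 in_range xmin xmax ymin ymax p
               & forall i j', (i < n)%N -> (j' < j)%N ->
                   in_range xmin xmax ymin ymax (M i j') ->
                   lex_le p (M i j')]
  end.

Definition inv (j : nat) (st : option (R * R) * nat * nat) : Prop :=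
  let: (cand, i, cost) := st in
  [/\ (i < n)%N, i = n.-1 \/ (forall j', (j <= j')%N -> (j' < n)%N -> f i j'),
      cand_ok j cand & (cost + i <= 2 * j + n.-1)%N].

Lemma in_range_f p : in_range xmin xmax ymin ymax p -> climb_ok xmin ymax p.
Proof. by rewrite /in_range /climb_ok => /and4P[-> _ _ ->]. Qed.

Lemma step_inv j st : (j < n)%N -> inv j st ->
  inv j.+1 (sweep_step A B xmin xmax ymin ymax st j).
Proof.
move=> jn; case: st => [[cand i] cost] [iln iinv cok ccost].
rewrite /sweep_step.
have := climb_cost A B xmin ymax j i.
have [rle rok rtop] := climb_spec A B xmin ymax j i.
move=> hc; move: rle rok rtop hc.
case: (climb A B xmin ymax j i) => r cc /= rle rok rtop hc.
set p := M r j.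
have rn : (r < n)%N by apply: leq_ltn_trans iln.
have Col : forall k, (k < n)%N -> in_range xmin xmax ymin ymax (M k j) ->
    in_range xmin xmax ymin ymax p /\ lex_le p (M k j).
  move=> k kn ik.
  have fk := in_range_f ik.
  have rk : (r <= k)%N.
    rewrite leqNgt; apply/negP => kr.
    have r0 : (0 < r)%N by lia.
    have := rtop r0; rewrite (f_row fk (_ : (k <= r.-1)%N)) //; lia.
  have fr : f r j.
    move: rle; rewrite leq_eqVlt => /orP[/eqP ri|ri]; last exact: rok.
    case: iinv => [ie|H]; last by move: (H j (leqnn j) jn); rewrite -ri.
    have -> : r = k by lia.
    exact: fk.
  split.
    move: ik fr; rewrite /in_range /climb_ok /p.
    have [a b] := row_weak j rk kn; lra.
  move: rk; rewrite /p leq_eqVlt => /orP[/eqP->|rk]; first by rewrite /lex_le eqxx.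
  by rewrite /lex_le /lex_lt row_strict ?orbT.
rewrite /=; split => //.
- move: rle; rewrite leq_eqVlt => /orP[/eqP ri|ri].
    case: iinv => [ie|H]; [left; by rewrite ri | right => j' jj' j'n].
    by rewrite ri; apply: H => //; lia.
  right => j' jj' j'n; apply: (@f_col r j) => //; last lia.
  exact: rok.
- case: cand cok => [c|] /=.
    case=> [ex cr cmin].
    case: ifP => /andP.
      case=> pr plt; split => //.
        by exists r, j; split.
      move=> k j' kn; rewrite ltnS leq_eqVlt => /orP[/eqP->|j'j] ik.
        by case: (Col k kn ik).
      exact: lex_lt_le_trans plt (cmin _ _ kn j'j ik).
    move=> hn; split => // k j' kn; rewrite ltnS leq_eqVlt => /orP[/eqP->|j'j] ik; last exact: cmin.
    have [pr ple] := Col k kn ik.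
    have nlt : ~~ lex_lt p c by apply/negP => h; apply: hn; split.
    exact: lex_le_trans (lex_total nlt) ple.
  move=> none; case: ifP => /andP.
    case=> pr _; split => //; first by exists r, j; split.
    move=> k j' kn; rewrite ltnS leq_eqVlt => /orP[/eqP->|j'j] ik.
      by case: (Col k kn ik).
    by move: (none _ _ kn j'j); rewrite ik.
  move=> hn k j' kn; rewrite ltnS leq_eqVlt => /orP[/eqP->|j'j].
    apply/negP => ik; apply: hn; split => //; by case: (Col k kn ik).
  exact: none.
- lia.
Qed.

Lemma foldl_inv m : (0 < n)%N -> (m <= n)%N ->
  inv m (foldl (sweep_step A B xmin xmax ymin ymax) (None, n.-1, 0%N) (iota 0 m)).
Proof.
move=> n0; elim: m => [_|m IH mn].
  split => //=; first lia; by left.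
rewrite -addn1 iotaD foldl_cat /= add0n addn1.
apply: step_inv => //; apply: IH; lia.
Qed.

Lemma main_correct :
  lex_min_in_range n A B xmin xmax ymin ymax (sweep n A B xmin xmax ymin ymax).
Proof.
case: (posnP n) => [n0|n0].
  rewrite /sweep /sweep_full; have -> : iota 0 n = [::] by rewrite n0.
  by move=> i j; rewrite n0.
have := foldl_inv n0 (leqnn n).
rewrite /sweep /sweep_full.
case: foldl => [[cand i] cost] [_ _ cok _].
by case: cand cok.
Qed.

End Main.

Lemma cost_gen (R : realFieldType) n (A B : seq (R * R)) xmin xmax ymin ymax m :

  ((foldl (sweep_step A B xmin xmax ymin ymax) (None, n.-1, 0%N) (iota 0 m)).2 +
   (foldl (sweep_step A B xmin xmax ymin ymax) (None, n.-1, 0%N) (iota 0 m)).1.2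
    <= 2 * m + n.-1)%N.
Proof.
elim: m => [|m IH]; first by rewrite /=; lia.
rewrite -addn1 iotaD foldl_cat add0n addn1 /=.
move: IH; case: foldl => [[c i] cost] /= IH.
have := climb_cost A B xmin ymax m i.
have [rle _ _] := climb_spec A B xmin ymax m i.
lia.
Qed.

Theorem lemma2 :
  (forall (R : realFieldType) (n : nat) (A B : seq (R * R)) (xmin xmax ymin ymax : R),
      sorted_pareto n A -> sorted_pareto n B ->
      lex_min_in_range n A B xmin xmax ymin ymax (sweep n A B xmin xmax ymin ymax))
  /\
  (exists C : nat, forall (R : realFieldType) (n : nat) (A B : seq (R * R))
      (xmin xmax ymin ymax : R),
      sorted_pareto n A -> sorted_pareto n B ->
      (sweep_cost n A B xmin xmax ymin ymax <= C * n)%N).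
Proof.
split.
  by move=> R n A B xmin xmax ymin ymax HA HB; apply: main_correct.
exists 3%N => R n A B xmin xmax ymin ymax _ _.
have := cost_gen n A B xmin xmax ymin ymax n.
rewrite /sweep_cost /sweep_full /=; lia.
Qed.
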